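(* Let $n\ge 1$ and $m\ge 2$ be integers with $m\nmid n$, let $\ell=\lfloor n/m\rfloor$, and let $G_{n,m}=\{\theta_{m,0}+\sum_{k=1}^{\ell}a_k\theta_{m,k}: a_k\in\mathbb{F}_2\}$. Then $G_{n,m}$ is an abelian group under composition of maps, and it is isomorphic to the unit group $\left(\mathbb{F}_2[z]/(z^{\ell+1})\right)^*$.
   Context: For $x=(x_0,\dots,x_{n-1})\in\mathbb{F}_2^n$, indices of coordinates are taken modulo $n$. For a nonnegative integer $k$, the map $\theta_{m,k}\colon\mathbb{F}_2^n\to\mathbb{F}_2^n$ is defined by $\theta_{m,k}(x)=y$ with $y_i=x_{i+mk}\prod_{1\le j\le mk-1,\ m\nmid j}(x_{i+j}+1)$ for $i\in\{0,\dots,n-1\}$; $\theta_{m,0}$ is the identity map. Sums of maps are pointwise sums. *)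

(* Defs.v *)
From HB Require Import structures.
From mathcomp Require Import all_boot all_fingroup all_algebra.
Set Implicit Arguments. Unset Strict Implicit. Unset Printing Implicit Defensive.
Import GRing.Theory.
Local Open Scope ring_scope.

Notation vec n := {ffun 'I_n -> 'F_2}.

(* coordinate x_k with index taken modulo n (meaningful for n >= 1) *)
Definition xat (n : nat) (x : vec n) (k : nat) : 'F_2 :=
  match (insub (k %% n)%N : option 'I_n) with Some i => x i | None => 0 end.

Notation map_n n := {ffun vec n -> vec n}.

Definition idmap_n (n : nat) : map_n n := [ffun x => x].

Definition compose_n (n : nat) (f g : map_n n) : map_n n := [ffun x => f (g x)].

Definition theta (n m k : nat) : map_n n :=
  [ffun x : vec n => if k == 0%N then x else
     [ffun i : 'I_n => xat x (i + m * k)%N *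
        \prod_(1 <= j < (m * k)%N | ~~ (m %| j)%N) (xat x (i + j)%N + 1)]].

(* G_{n,m} = { theta_{m,0} + sum_{k=1}^{l} a_k theta_{m,k} : a_k in F_2 },
   l = floor(n/m); sums of maps are pointwise. a is indexed by k-1. *)
Definition Gnm (n m : nat) : {set map_n n} :=
  [set f | [exists a : {ffun 'I_(n %/ m)%N -> 'F_2},
     f == [ffun x => [ffun i : 'I_n =>
              theta n m 0 x i + \sum_(k < n %/ m) a k * theta n m k.+1 x i]]]].

Notation QR l := {poly %/ ('X^(l.+1) : {poly 'F_2})}.

(* Main.v *)
Require Import Defs.
From HB Require Import structures.
From mathcomp Require Import all_boot all_fingroup all_algebra.
From mathcomp Require Import zify.
Import GRing.Theory.
Local Open Scope ring_scope.

Lemma F2_cases (v : 'F_2) : v = 0 \/ v = 1.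
Proof. case: v => [[|[|//]]] H; [left|right]; exact: val_inj. Qed.
Lemma F2_11 : (1 + 1 : 'F_2) = 0. Proof. by apply: val_inj. Qed.
Lemma F2_10 : (1 : 'F_2) != 0. Proof. by []. Qed.

Section Comb.
Variable m : nat.
Hypothesis m_gt0 : (0 < m)%N.

Definition okz (X : nat -> 'F_2) (a K : nat) : bool :=
  all (fun s => (m %| s)%N || (X (a + s)%N == 0)) (iota 1 K.-1).

Lemma okzP X a K :
  reflect (forall s, (0 < s < K)%N -> ~~ (m %| s)%N -> X (a + s)%N = 0) (okz X a K).
Proof.
apply: (iffP allP) => H.
  move=> s Hs Hm; have : s \in iota 1 K.-1 by rewrite mem_iota; lia.
  by move/H; rewrite (negbTE Hm) /= => /eqP.
move=> s; rewrite mem_iota => Hs; case: (boolP (m %| s)%N) => //= Hm.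
by rewrite H //; lia.
Qed.

Lemma okzN X a K :
  ~~ okz X a K -> exists2 s, (0 < s < K)%N /\ ~~ (m %| s)%N & X (a + s)%N <> 0.
Proof.
move/allPn => [s]; rewrite mem_iota negb_or => Hs /andP [Hm HX].
exists s; first by split=> //; lia.
by move/eqP: HX.
Qed.

Definition thK (X : nat -> 'F_2) (K a : nat) : 'F_2 := if okz X a K then X (a + K)%N else 0.

Lemma okz_split X K J : (m %| K)%N ->
  okz X 0 (K + J) = okz X 0 K && okz X K J.
Proof.
move=> mK; apply/idP/idP.
  move/okzP => H; apply/andP; split; apply/okzP => s Hs Hm.
    by apply: H => //; lia.
  rewrite -(add0n K) -addnA; apply: H; first lia.
  by rewrite dvdn_addr.
move/andP => [/okzP H1 /okzP H2]; apply/okzP => s Hs Hm.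
case: (ltnP s K) => HsK; first by apply: H1 => //; lia.
have Hne : s != K by apply: contraNneq Hm => ->.
have -> : (0 + s = K + (s - K))%N by lia.
apply: H2; first lia.
by rewrite -(dvdn_addr _ mK) subnKC.
Qed.

Lemma natA1 K J t : (m %| K)%N -> (m %| J)%N -> ~~ (m %| t)%N -> (0 < t < K)%N ->
  (K <= t + J)%N -> (0 < K - t < J)%N /\ ~~ (m %| K - t)%N.
Proof.
move=> mK mJ mt Ht HtJ.
have ndiv : ~~ (m %| K - t)%N.
  apply: contra mt => H.
  have -> : t = (K - (K - t))%N by lia.
  exact: dvdn_sub.
split=> //; apply/andP; split; first lia.
rewrite ltn_neqAle; apply/andP; split; last lia.
by apply: contraNneq ndiv => ->.
Qed.

Arguments natA1 [K J t].

Lemma natA2 K J t : (m %| K)%N -> (m %| J)%N -> ~~ (m %| t)%N -> (0 < t < K)%N ->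
  (K <= t + J)%N -> (0 < t + J - K < J)%N /\ ~~ (m %| t + J - K)%N.
Proof.
move=> mK mJ mt Ht HtJ.
have ndiv : ~~ (m %| t + J - K)%N.
  apply: contra mt => H.
  have : (m %| (t + J - K) + K)%N by rewrite dvdn_add.
  by rewrite subnK // dvdn_addl.
split=> //; apply/andP; split; last lia.
rewrite lt0n; apply: contraNneq ndiv => ->; exact: dvdn0.
Qed.

Arguments natA2 [K J t].

Lemma key X K J : (m %| K)%N -> (m %| J)%N -> (0 < K)%N -> (0 < J)%N ->
  thK (fun t => X t + thK X J t) K 0 = thK X K 0 + thK X (K + J) 0.
Proof.
move=> mK mJ K0 J0.
set Y := fun t => X t + thK X J t.
rewrite /thK okz_split // !add0n.
have HYK : Y K = X K + (if okz X K J then X (K + J)%N else 0) by [].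
case: (boolP (okz X 0 K)) => HA; last first.
  rewrite andFb addr0.
  have [t [Ht Hmt] HXt] := @okzN X 0 K HA.
  have HXt1 : X t = 1 by case: (F2_cases (X t)); rewrite add0n in HXt.
  suff: forall d t, (K - t <= d)%N -> (0 < t < K)%N -> ~~ (m %| t)%N -> X t = 1 ->
      (if okz Y 0 K then Y K else 0) = 0.
    by move=> H; apply: (H (K - t)%N t).
  clear t Ht Hmt HXt HXt1.
  elim=> [|d IH] t Hd Ht Hmt HXt; first lia.
  case: (boolP (okz X t J)) => HtJ; last first.
    suff -> : okz Y 0 K = false by [].
    apply/negbTE/negP => /okzP /(_ t Ht Hmt).
    by rewrite add0n /Y /thK (negbTE HtJ) addr0 HXt.
  case: (F2_cases (X (t + J)%N)) => HXtJ.
    suff -> : okz Y 0 K = false by [].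
    apply/negbTE/negP => /okzP /(_ t Ht Hmt).
    by rewrite add0n /Y /thK HtJ HXtJ addr0 HXt.
  case: (ltnP (t + J) K) => HtJK.
    by apply: (IH (t + J)%N) => //; [lia | lia | rewrite dvdn_addl].
  have [HsJ Hms] := natA1 mK mJ Hmt Ht HtJK.
  have HXK : X K = 0.
    move/okzP: HtJ => /(_ _ HsJ Hms); by rewrite subnKC //; lia.
  have [HuJ Hmu] := natA2 mK mJ Hmt Ht HtJK.
  have HKJ : okz X K J = false.
    apply/negbTE/negP => /okzP /(_ _ HuJ Hmu).
    by rewrite subnKC ?HXtJ //; lia.
  by rewrite HYK HXK HKJ addr0; case: ifP.
rewrite andTb.
have Xt0 : forall t, (0 < t < K)%N -> ~~ (m %| t)%N -> X t = 0.
  by move=> t Ht Hm; move/okzP: HA => /(_ t Ht Hm); rewrite add0n.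
case: (F2_cases (X K)) => HXK.
  rewrite HXK add0r.
  case: (F2_cases (Y K)) => HY.
    have E : (if okz X K J then X (K + J)%N else 0) = 0 by move: HYK; rewrite HY HXK add0r => /esym.
    by rewrite E HY; case: ifP.
  have HJ : okz X K J.
    by apply/negP => HJ; move: HY; rewrite HYK (negbTE (introN idP HJ)) addr0 HXK => /eqP.
  suff -> : okz Y 0 K by rewrite HY -HY HYK HXK add0r.
  apply/okzP => t Ht Hm; rewrite add0n /Y /thK Xt0 // add0r.
  case: ifP => // HtJ.
  case: (ltnP (t + J) K) => HtJK.
    by rewrite Xt0 // ?dvdn_addl //; lia.
  have [HuJ Hmu] := natA2 mK mJ Hm Ht HtJK.
  move/okzP: HJ => /(_ _ HuJ Hmu); rewrite subnKC //; lia.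
have -> : okz Y 0 K.
  apply/okzP => t Ht Hm; rewrite add0n /Y /thK Xt0 // add0r.
  case: ifP => // HtJ.
  case: (ltnP (t + J) K) => HtJK.
    by rewrite Xt0 // ?dvdn_addl //; lia.
  have [HsJ Hms] := natA1 mK mJ Hm Ht HtJK.
  move/okzP: HtJ => /(_ _ HsJ Hms).
  by rewrite subnKC ?HXK //; lia.
by rewrite HYK HXK.
Qed.

End Comb.

Lemma okz_ext m X X' a K : (forall t, X t = X' t) -> okz m X a K = okz m X' a K.
Proof. by move=> H; apply: eq_all => s; rewrite H. Qed.

Lemma thK_ext m X X' K a : (forall t, X t = X' t) -> thK m X K a = thK m X' K a.
Proof. by move=> H; rewrite /thK (okz_ext m X X' a K H) H. Qed.

Lemma thK_shift m X K a : thK m X K a = thK m (fun t => X (a + t)%N) K 0.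
Proof. by rewrite /thK /okz add0n. Qed.

Lemma thK_shiftA m X K a b : thK m X K (a + b) = thK m (fun t => X (a + t)%N) K b.
Proof.
rewrite /thK /okz -addnA; congr (if _ then _ else _); apply: eq_all => s; by rewrite addnA.
Qed.

Section Main.
Variables n m : nat.
Hypothesis hn : (0 < n)%N.
Hypothesis hm : (1 < m)%N.
Hypothesis hmn : ~~ (m %| n)%N.
Let m0 : (0 < m)%N. Proof. exact: ltnW. Qed.

Lemma xatE (x : vec n) k : xat x k = x (Ordinal (ltn_pmod k hn)).
Proof.
rewrite /xat; case: insubP => [i _ Hi|]; last by rewrite ltn_pmod.
by apply: congr1; apply: val_inj.
Qed.

Lemma xat_ord (x : vec n) (i : 'I_n) : xat x i = x i.
Proof. by rewrite xatE; apply: congr1; apply: val_inj; rewrite /= modn_small. Qed.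

Lemma xat_mod (x : vec n) k : xat x (k %% n) = xat x k.
Proof. by rewrite !xatE; apply: congr1; apply: val_inj; rewrite /= modn_mod. Qed.

Lemma xat_add (x y : vec n) k : xat (x + y) k = xat x k + xat y k.
Proof. by rewrite !xatE ffunE. Qed.

Lemma F2_add1 (v : 'F_2) : v + 1 = (v == 0)%:R.
Proof. by case: (F2_cases v) => ->; rewrite ?add0r ?F2_11. Qed.

Lemma prod_okz (x : vec n) a K :
  \prod_(1 <= j < K | ~~ (m %| j)%N) (xat x (a + j) + 1) = (okz m (xat x) a K)%:R.
Proof.
rewrite /okz /index_iota subn1 -big_filter.
elim: (iota 1 K.-1) => [|s r IH]; first by rewrite big_nil.
rewrite /=; case: (boolP (m %| s)%N) => Hs /=; first by rewrite IH.
rewrite big_cons IH F2_add1; by case: (xat x (a + s) == 0) => /=; rewrite ?mul1r ?mul0r.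
Qed.

Lemma thetaE k (x : vec n) (i : 'I_n) : (0 < k)%N ->
  theta n m k x i = thK m (xat x) (m * k) i.
Proof.
move=> k0; rewrite /theta ffunE; have -> : (k == 0%N) = false by lia.
rewrite ffunE prod_okz /thK; case: okz => /=; first by rewrite mulr1.
by rewrite mulr0.
Qed.

Lemma theta0 (x : vec n) : theta n m 0 x = x.
Proof. by rewrite /theta ffunE. Qed.

Lemma thK_mod X K p : (forall t, X (t %% n)%N = X t) -> thK m X K (p %% n) = thK m X K p.
Proof.
move=> HX; rewrite /thK.
have E : forall s, X (p %% n + s)%N = X (p + s)%N by move=> s; rewrite -HX modnDml HX.
rewrite /okz E; congr (if _ then _ else _); apply: eq_all => s; by rewrite E.
Qed.

Lemma xat_theta j (x : vec n) t : (0 < j)%N ->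
  xat (theta n m j x) t = thK m (xat x) (m * j) t.
Proof.
move=> j0; rewrite xatE thetaE //= thK_mod //; exact: xat_mod.
Qed.

Lemma L1 k j (x : vec n) : (0 < j)%N ->
  theta n m k (x + theta n m j x) = theta n m k x + theta n m (k + j) x.
Proof.
move=> j0; apply/ffunP => i; rewrite [RHS]ffunE.
case: (posnP k) => [->|k0]; first by rewrite !theta0 add0n ffunE.
rewrite !thetaE //; last by rewrite addn_gt0 k0.
rewrite (thK_ext _ _ (fun t => xat x t + thK m (xat x) (m * j) t)); last first.
  by move=> t; rewrite xat_add xat_theta.
rewrite !(thK_shift m _ _ i).
rewrite (thK_ext _ _ (fun t => xat x (i + t)%N + thK m (fun t => xat x (i + t)%N) (m * j) t)); last first.
  by move=> t; rewrite thK_shiftA.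
rewrite key // ?dvdn_mulr // ?muln_gt0 ?m0 // mulnDr.
by [].
Qed.

Let l := (n %/ m)%N.

Lemma ml_lt_n : (m * l < n)%N.
Proof.
have H := divn_eq n m; have : (0 < n %% m)%N by rewrite lt0n -/(dvdn m n) (negbTE hmn).
rewrite /l; lia.
Qed.

Lemma thetaZ K (x : vec n) : (l < K)%N -> theta n m K x = 0.
Proof.
move=> lK; apply/ffunP => i; rewrite [RHS]ffunE thetaE; last lia.
have HmK : (n < m * K)%N.
  have := ltn_ceil n m0; rewrite -/l => H.
  by apply: (leq_trans H); rewrite mulnC leq_pmul2l.
rewrite /thK; case: ifP => // /okzP H.
set t0 := (m * K - n)%N.
have Ht0 : (0 < t0 < m * K)%N by rewrite /t0; lia.
have Hmt0 : ~~ (m %| t0)%N.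
  apply: contra hmn => Hd.
  have -> : n = (m * K - t0)%N by rewrite /t0; lia.
  by apply: dvdn_sub => //; apply: dvdn_mulr.
have := H m0 _ Ht0 Hmt0.
have -> : (i + m * K = (i + t0) + n * 1)%N by rewrite /t0; lia.
move=> H0; by rewrite -xat_mod muln1 modnDr xat_mod.
Qed.


Definition Fp (p : {poly 'F_2}) : map_n n :=
  [ffun x => [ffun i => \sum_(k < l.+1) p`_k * theta n m k x i]].
Definition sim (p q : {poly 'F_2}) := forall k, (k < l.+1)%N -> p`_k = q`_k.

Lemma FpE p x i : Fp p x i = \sum_(k < l.+1) p`_k * theta n m k x i.
Proof. by rewrite !ffunE. Qed.

Lemma Fp_sim p q : sim p q -> Fp p = Fp q.
Proof.
move=> H; apply/ffunP => x; apply/ffunP => i; rewrite !FpE.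
by apply: eq_bigr => k _; rewrite H.
Qed.

Lemma wide N (c : nat -> 'F_2) x i : (l.+1 <= N)%N ->
  \sum_(k < N) c k * theta n m k x i = \sum_(k < l.+1) c k * theta n m k x i.
Proof.
move=> H; rewrite (big_ord_widen N (fun k => c k * theta n m k x i) H) [RHS]big_mkcond.
apply: eq_bigr => k _; case: ifP => // /negbT; rewrite -leqNgt => Hk.
by rewrite thetaZ // ffunE mulr0.
Qed.

Lemma Fp_add p q x : Fp (p + q) x = Fp p x + Fp q x.
Proof.
apply/ffunP => i; rewrite [RHS]ffunE !FpE -big_split; apply: eq_bigr => k _.
by rewrite coefD mulrDl.
Qed.

Lemma Fp_mulX p j x i : Fp (p * 'X^j) x i = \sum_(k < l.+1) p`_k * theta n m (k + j) x i.
Proof.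
rewrite FpE -(wide (j + l.+1)) ?leq_addl // big_split_ord /= big1 ?add0r.
  by apply: eq_bigr => k _; rewrite coefMXn ltnNge leq_addr /= addKn addnC.
by move=> k _; rewrite coefMXn /= ltn_ord mul0r.
Qed.

Lemma Fp1 x : Fp 1 x = x.
Proof.
apply/ffunP => i; rewrite FpE big_ord_recl coef1 eqxx mul1r theta0 big1 ?addr0 //.
by move=> k _; rewrite coef1 /= mul0r.
Qed.

Lemma Mlem p j x : (0 < j)%N -> Fp p (x + theta n m j x) = Fp (p * (1 + 'X^j)) x.
Proof.
move=> j0; apply/ffunP => i; rewrite mulrDr mulr1 Fp_add [RHS]ffunE Fp_mulX !FpE -big_split.
by apply: eq_bigr => k _; rewrite L1 // ffunE mulrDr.
Qed.

Lemma Fp1X j x : (0 < j)%N -> Fp (1 + 'X^j) x = x + theta n m j x.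
Proof.
move=> j0; apply/ffunP => i; rewrite Fp_add [LHS]ffunE [RHS]ffunE Fp1 -(mul1r ('X^j)) Fp_mulX.
rewrite big_ord_recl coef1 eqxx mul1r add0n big1 ?addr0 //.
by move=> k _; rewrite coef1 /= mul0r.
Qed.

Definition good q := forall p x, Fp p (Fp q x) = Fp (p * q) x.

Lemma good1 : good 1.
Proof. by move=> p x; rewrite Fp1 mulr1. Qed.

Lemma good1X j : (0 < j)%N -> good (1 + 'X^j).
Proof. by move=> j0 p x; rewrite Fp1X // Mlem. Qed.

Lemma goodM a b : good a -> good b -> good (a * b).
Proof. by move=> ga gb p x; rewrite -gb ga gb mulrA. Qed.

Lemma sim_refl p : sim p p. Proof. by []. Qed.
Lemma sim_sym p q : sim p q -> sim q p. Proof. by move=> H k Hk; rewrite H. Qed.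
Lemma sim_trans p q r : sim p q -> sim q r -> sim p r.
Proof. by move=> H1 H2 k Hk; rewrite H1 ?H2. Qed.
Lemma simM c a b : sim a b -> sim (c * a) (c * b).
Proof.
move=> H k Hk; rewrite !coefM; apply: eq_bigr => j _; rewrite H //.
exact: leq_ltn_trans (leq_subr _ _) Hk.
Qed.
Lemma simMr c a b : sim a b -> sim (a * c) (b * c).
Proof. by move=> H; rewrite ![_ * c]mulrC; apply: simM. Qed.

Lemma good_sim q q' : good q -> sim q q' -> good q'.
Proof.
move=> gq H p x; rewrite -(Fp_sim _ _ H) gq.
by rewrite (Fp_sim (p * q) (p * q')) //; apply: simM.
Qed.

Arguments sim_trans [p q r].
Arguments sim_sym [p q].
Arguments simM c [a b].
Arguments simMr c [a b].
Arguments good_sim [q q'].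

Lemma polyYY (P : {poly 'F_2}) : P + P = 0.
Proof.
apply/polyP => k; rewrite coefD coef0.
by case: (F2_cases P`_k) => ->; rewrite ?addr0 ?F2_11.
Qed.

Lemma frob s r : (1 + 'X^s : {poly 'F_2}) ^+ (2 ^ r) = 1 + 'X^(s * 2 ^ r).
Proof.
elim: r => [|r IH]; first by rewrite expn0 expr1 muln1.
rewrite expnSr exprM IH expr2 mulrDl !mulrDr !mul1r mulr1 -exprD.
rewrite addrA -(addrA 1 _ _) polyYY addr0; congr (_ + 'X^_); lia.
Qed.

Lemma sim_big q N : (l < N)%N -> sim (q * (1 + 'X^N)) q.
Proof.
move=> H k Hk; rewrite mulrDr mulr1 coefD coefMXn.
have -> : (k < N)%N by lia.
by rewrite addr0.
Qed.

Definition GI q := good q /\ exists q', sim (q * q') 1.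

Lemma GI1 : GI 1.
Proof. by split; [exact: good1 | exists 1; rewrite mulr1]. Qed.

Lemma GI_sim q q' : GI q -> sim q q' -> GI q'.
Proof.
move=> [g [r Hr]] H; split; first exact: good_sim g H.
exists r; apply: (sim_trans _ Hr); apply: simMr; exact: sim_sym.
Qed.

Arguments GI_sim [q q'].

Lemma GIM a b : GI a -> GI b -> GI (a * b).
Proof.
move=> [ga [a' Ha]] [gb [b' Hb]]; split; first exact: goodM.
exists (a' * b').
have -> : a * b * (a' * b') = (a * a') * (b * b').
  by rewrite -!mulrA; congr (_ * _); rewrite mulrCA.
apply: (sim_trans (simMr (b * b') Ha)); by rewrite mul1r.
Qed.

Lemma GIexp a N : GI a -> GI (a ^+ N).
Proof.
move=> Ha; elim: N => [|N IH]; first by rewrite expr0; exact: GI1.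
by rewrite exprS; apply: GIM.
Qed.

Lemma l_lt_pow s : (0 < s)%N -> (l < s * 2 ^ l)%N.
Proof.
move=> s0; have := ltn_expl l (isT : (1 < 2)%N).
move=> H; apply: (leq_trans H); rewrite leq_pmull //.
Qed.

Lemma GI1X s : (0 < s)%N -> GI (1 + 'X^s).
Proof.
move=> s0; split; first exact: good1X.
exists ((1 + 'X^s) ^+ (2 ^ l).-1).
rewrite -exprS prednK ?expn_gt0 // frob.
by have := sim_big 1 _ (l_lt_pow _ s0); rewrite mul1r.
Qed.

Lemma F2_neq0 (v : 'F_2) : v != 0 -> v = 1.
Proof. by case: (F2_cases v) => ->. Qed.

Lemma all_GI (q : {poly 'F_2}) : q`_0 = 1 -> GI q.
Proof.
suff H : forall d s (q : {poly 'F_2}), (l.+1 <= s + d)%N -> (0 < s)%N -> q`_0 = 1 ->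
    (forall j, (0 < j < s)%N -> q`_j = 0) -> GI q.
  move=> q0; apply: (H l 1%N) => // j; lia.
elim=> [|d IH] s {}q Hd s0 q0 Hj.
  apply: (GI_sim GI1) => k Hk; rewrite coef1.
  case: (posnP k) => [->|k0]; first by rewrite q0.
  rewrite Hj //; last lia.
case: (boolP (q`_s == 0)) => [/eqP Hs|Hs].
  apply: (IH s.+1) => //; first lia.
  move=> j Hj'; case: (ltnP j s) => Hjs; first by apply: Hj; lia.
  by have -> : j = s by lia.
have {}Hs := F2_neq0 _ Hs.
set q1 := q * (1 + 'X^s).
have G1 : GI q1.
  apply: (IH s.+1) => //; first lia.
    by rewrite /q1 mulrDr mulr1 coefD coefMXn s0 addr0.
  move=> j Hj'; rewrite /q1 mulrDr mulr1 coefD coefMXn.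
  case: (ltnP j s) => Hjs; first by rewrite addr0; apply: Hj; lia.
  have -> : j = s by lia.
  by rewrite subnn Hs q0 F2_11.
have G2 := GIM _ _ G1 (GIexp _ (2 ^ l).-1 (GI1X _ s0)).
apply: (GI_sim G2); rewrite /q1 -mulrA -exprS prednK ?expn_gt0 // frob.
exact: (sim_big _ _ (l_lt_pow _ s0)).
Qed.

Let h : {poly 'F_2} := 'X^(l.+1).
Local Notation QRl := {poly %/ h}.

Lemma mk_h : mk_monic h = 'X^(l.+1).
Proof. by rewrite /h mk_monic_Xn. Qed.

Lemma qcoef (u : QRl) k : (l.+1 <= k)%N -> (u : {poly 'F_2})`_k = 0.
Proof.
move=> Hk; have Hs := size_mk_monic u.
have E : size (mk_monic h) = l.+2 by rewrite mk_h size_polyXn.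
apply: nth_default; apply: leq_trans Hk; rewrite -ltnS; apply: (leq_trans Hs).
by rewrite E.
Qed.

Lemma in_qpoly_coef p k : (k < l.+1)%N -> ((in_qpoly h p : QRl) : {poly 'F_2})`_k = p`_k.
Proof.
move=> Hk; rewrite /in_qpoly /=.
have E := Pdiv.RingMonic.rdivp_eq (monic_mk_monic h) p.
have Z : forall a : {poly 'F_2}, (a * mk_monic h)`_k = 0.
  by move=> a; rewrite mk_h coefMXn Hk.
by rewrite {2}E coefD Z add0r.
Qed.

Arguments in_qpoly_coef p [k].
Arguments qcoef u [k].

Lemma qpoly_eq p q : in_qpoly h p = in_qpoly h q <-> sim p q.
Proof.
split=> [H k Hk|H].
  by rewrite -(in_qpoly_coef p Hk) -(in_qpoly_coef q Hk) H.
apply: val_inj; apply/polyP => k /=.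
case: (ltnP k l.+1) => Hk.
  by have := in_qpoly_coef p Hk; have := in_qpoly_coef q Hk; rewrite /= => -> ->; rewrite H.
by rewrite (qcoef (in_qpoly h p) Hk) (qcoef (in_qpoly h q) Hk).
Qed.

Lemma qpoly_val (u : QRl) : in_qpoly h (u : {poly 'F_2}) = u.
Proof.
apply: val_inj; apply/polyP => k.
case: (ltnP k l.+1) => Hk; first exact: in_qpoly_coef.
by rewrite (qcoef (in_qpoly h _) Hk) (qcoef u Hk).
Qed.

Let i0 : 'I_n := Ordinal hn.

Lemma theta_e k j : (k < l.+1)%N -> (j < l.+1)%N ->
  theta n m j [ffun i : 'I_n => ((val i == m * k)%N)%:R : 'F_2] i0 = ((j == k)%N)%:R.
Proof.
move=> Hk Hj.
have Hml := ml_lt_n.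
have Hmk : (m * k < n)%N by apply: leq_ltn_trans Hml; rewrite leq_pmul2l //; lia.
have Hmj : (m * j < n)%N by apply: leq_ltn_trans Hml; rewrite leq_pmul2l //; lia.
have xe : forall t, (t < n)%N ->
    xat [ffun i : 'I_n => ((val i == m * k)%N)%:R : 'F_2] t = ((t == m * k)%N)%:R.
  by move=> t Ht; rewrite xatE ffunE /= modn_small.
case: (posnP j) => [->|j0].
  rewrite theta0 ffunE /=.
  by rewrite eq_sym muln_eq0 (negbTE (lt0n_neq0 m0)) /= eq_sym.
rewrite thetaE // /thK /= add0n xe // eqn_pmul2l //.
case: (boolP (j == k)%N) => [/eqP Hjk|Hjk]; last by case: okz.
case: ifP => // /negbT /negP []; apply/okzP => // s Hs _.
by rewrite add0n xe; [have -> : (s == m * k)%N = false by lia | lia].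
Qed.

Lemma Fp_inj p q : Fp p = Fp q -> sim p q.
Proof.
move=> H k Hk.
set e := [ffun i : 'I_n => ((val i == m * k)%N)%:R : 'F_2].
have E : forall r, Fp r e i0 = r`_k.
  move=> r; rewrite FpE (bigD1 (Ordinal Hk)) //= theta_e // eqxx mulr1 big1 ?addr0 //.
  move=> j Hjk; rewrite theta_e // (_ : (j == k :> nat) = false) ?mulr0 //.
  apply/negbTE; apply: contra Hjk => /eqP Hjk; apply/eqP/val_inj => /=; exact: Hjk.
by rewrite -!E H.
Qed.

Definition ca (a : {ffun 'I_l -> 'F_2}) : {poly 'F_2} :=
  \poly_(k < l.+1) (if k is k'.+1 then (if (insub k' : option 'I_l) is Some o then a o else 0) else 1).

Lemma mk_eq (a : {ffun 'I_l -> 'F_2}) :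
  [ffun x => [ffun i : 'I_n => theta n m 0 x i + \sum_(k < l) a k * theta n m k.+1 x i]]
  = Fp (ca a).
Proof.
apply/ffunP => x; apply/ffunP => i; rewrite /Fp !ffunE big_ord_recl coef_poly /= mul1r.
rewrite theta0; congr (_ + _); apply: eq_bigr => k _; rewrite /bump /= ?add1n coef_poly ltnS ltn_ord /=.
by rewrite valK.
Qed.

Lemma Gnm_char f : f \in Gnm n m <-> exists2 p : {poly 'F_2}, p`_0 = 1 & f = Fp p.
Proof.
split.
  rewrite inE => /existsP [a /eqP ->]; exists (ca a); first by rewrite coef_poly.
  exact: mk_eq.
move=> [p p0 ->]; rewrite inE; apply/existsP.
exists [ffun o : 'I_l => p`_(o.+1)]; apply/eqP; rewrite mk_eq; apply: Fp_sim => k Hk.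
rewrite coef_poly Hk; case: k Hk => [|k] Hk /=; first by rewrite p0.
case: insubP => [o _ Ho | H]; first by rewrite ffunE Ho.
by move: H; rewrite -ltnS Hk.
Qed.

Definition phi (f : map_n n) : QRl :=
  odflt 0 [pick u : QRl | f == Fp (u : {poly 'F_2})].

Lemma phiE p : phi (Fp p) = in_qpoly h p.
Proof.
have Hs : sim p (in_qpoly h p : {poly 'F_2}) by move=> k Hk; rewrite in_qpoly_coef.
rewrite /phi; case: pickP => [u /eqP Hu | H] /=.
  by rewrite (proj2 (qpoly_eq _ _) (Fp_inj _ _ Hu)) qpoly_val.
by have := H (in_qpoly h p); rewrite (Fp_sim _ _ Hs) eqxx.
Qed.

Theorem main_sec :
  [/\ idmap_n n \in Gnm n m,
      {in Gnm n m &, forall f g, compose_n f g \in Gnm n m},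
      {in Gnm n m, forall f, exists2 g, g \in Gnm n m & compose_n g f = idmap_n n /\ compose_n f g = idmap_n n},
      {in Gnm n m &, forall f g, compose_n f g = compose_n g f} &
      exists phi : map_n n -> QR (divn n m),
        [/\ {in Gnm n m &, injective phi},
            phi @: Gnm n m = [set x : QR (divn n m) | x \is a GRing.unit] &
            {in Gnm n m &, forall f g, phi (compose_n f g) = phi f * phi g}]].
Proof.
have G1 : forall f, f \in Gnm n m -> exists2 p : {poly 'F_2}, p`_0 = 1 & f = Fp p.
  by move=> f /Gnm_char.
have G2 : forall p : {poly 'F_2}, p`_0 = 1 -> Fp p \in Gnm n m.
  by move=> p p0; apply/Gnm_char; exists p.
have comp : forall p q : {poly 'F_2}, q`_0 = 1 -> compose_n (Fp p) (Fp q) = Fp (p * q).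
  move=> p q q0; apply/ffunP => x; rewrite ffunE; exact: (all_GI _ q0).1.
have id1 : idmap_n n = Fp 1 by apply/ffunP => x; rewrite ffunE Fp1.
split.
- by rewrite id1; apply: G2; rewrite coef1.
- move=> f g /G1 [p p0 ->] /G1 [q q0 ->]; rewrite comp //; apply: G2.
  by rewrite coef0M p0 q0 mulr1.
- move=> f /G1 [p p0 ->].
  have [_ [q' Hq']] := all_GI _ p0.
  have q0 : q'`_0 = 1 by have := Hq' 0%N (ltn0Sn _); rewrite coef0M p0 mul1r coef1.
  exists (Fp q'); first exact: G2.
  rewrite !comp // id1; split; apply: Fp_sim => //; by rewrite mulrC.
- by move=> f g /G1 [p p0 ->] /G1 [q q0 ->]; rewrite !comp // mulrC.
exists phi; split.
- move=> f g /G1 [p p0 ->] /G1 [q q0 ->]; rewrite !phiE => /qpoly_eq H.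
  exact: Fp_sim.
- apply/setP => u; rewrite inE; apply/imsetP/idP.
    move=> [f /G1 [p p0 ->] ->]; rewrite phiE.
    have [_ [q' Hq']] := all_GI _ p0.
    apply/unitrP; exists (in_qpoly h q'); rewrite -!in_qpolyM -(in_qpoly1 h).
    by split; apply/qpoly_eq => //; rewrite mulrC.
  move/unitrP => [v [Hv _]].
  have Hs : sim ((v : {poly 'F_2}) * (u : {poly 'F_2})) 1.
    by apply/qpoly_eq; rewrite in_qpolyM !qpoly_val in_qpoly1.
  have u0 : (u : {poly 'F_2})`_0 = 1.
    have := Hs 0%N (ltn0Sn _); rewrite coef0M coef1 /=.
    case: (F2_cases (u : {poly 'F_2})`_0) => // ->; rewrite mulr0.
    by move=> /esym/eqP; rewrite oner_eq0.
  by exists (Fp (u : {poly 'F_2})); [exact: G2 | rewrite phiE qpoly_val].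
- by move=> f g /G1 [p p0 ->] /G1 [q q0 ->]; rewrite comp // !phiE in_qpolyM.
Qed.

End Main.

Theorem theorem2 (n m : nat) (hn : (1 <= n)%N) (hm : (2 <= m)%N) (hmn : ~~ (m %| n)%N) :
  [/\ idmap_n n \in Gnm n m,
      {in Gnm n m &, forall f g, compose_n f g \in Gnm n m},
      {in Gnm n m, forall f, exists2 g, g \in Gnm n m & compose_n g f = idmap_n n /\ compose_n f g = idmap_n n},
      {in Gnm n m &, forall f g, compose_n f g = compose_n g f} &
      exists phi : map_n n -> QR (divn n m),
        [/\ {in Gnm n m &, injective phi},
            phi @: Gnm n m = [set x : QR (divn n m) | x \is a GRing.unit] &
            {in Gnm n m &, forall f g, phi (compose_n f g) = phi f * phi g}]].
Proof. exact: main_sec. Qed.
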